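(* Assume each $f_i$ is $\sigma_i$-strongly convex with $L_i$-Lipschitz continuous gradient. Then for all $\lambda,\bar\lambda\in\mathbb{D}$, \[ d(\lambda)\ \ge\ d(\bar\lambda)+\langle \nabla d(\bar\lambda),\lambda-\bar\lambda\rangle-\tfrac12\|\lambda-\bar\lambda\|_W^2 . \]
   Context: Standing setup. Consider $\min_{z}\ f(z)=\sum_{i=1}^M f_i(z_i)$ subject to $Az=b$, $Cz\le c$, where $z=(z_1,\dots,z_M)$, $z_i\in\mathbb{R}^{n_i}$, $n=\sum_i n_i$, $A\in\mathbb{R}^{p\times n}$, $C\in\mathbb{R}^{q\times n}$, $b\in\mathbb{R}^p$, $c\in\mathbb{R}^q$, and each $f_i:\mathbb{R}^{n_i}\to\mathbb{R}$ is convex. The rows are partitioned into $\bar M$ blocks: $A$ has blocks $A_{ji}\in\mathbb{R}^{p_j\times n_i}$ and $C$ has blocks $C_{ji}\in\mathbb{R}^{q_j\times n_i}$ ($j=1,\dots,\bar M$, $i=1,\dots,M$, $\sum_j p_j=p$, $\sum_j q_j=q$). A matrix $E\in\{0,1\}^{\bar M\times M}$ is given such that $E_{ji}=0$ implies $A_{ji}=0$ and $C_{ji}=0$. Let $\bar{\mathcal N}_i=\{j: E_{ji}\neq 0\}$ and $\mathcal N_j=\{i:E_{ji}\ne 0\}$. Let $G=\begin{bmatrix}A\\ C\end{bmatrix}$, $g=\begin{bmatrix}b\\ c\end{bmatrix}$, dual variable $\lambda=(\nu,\mu)\in\mathbb{R}^p\times\mathbb{R}^q$, and $\mathbb{D}=\mathbb{R}^p\times\mathbb{R}^q_+$.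 The Lagrangian is $\mathcal L(z,\lambda)=f(z)+\langle\lambda,Gz-g\rangle$ and the dual function is $d(\lambda)=\min_{z\in\mathbb{R}^n}\mathcal L(z,\lambda)$; under strong convexity of $f$ it is differentiable with $\nabla d(\lambda)=Gz(\lambda)-g$, where $z(\lambda)$ is the unique minimizer of $\mathcal L(\cdot,\lambda)$. For each $i$, let $L_{d_i}=\big\|\begin{bmatrix}[A_{ji}]_{j\in\bar{\mathcal N}_i}\\ [C_{ji}]_{j\in\bar{\mathcal N}_i}\end{bmatrix}\big\|^2/\sigma_i$ (spectral norm of the stacked column blocks). Let $W=\mathrm{diag}(W_\nu,W_\mu)$ with $W_\nu=\mathrm{diag}\big(\sum_{i\in\mathcal N_j}L_{d_i}I_{p_j};\ j=1,\dots,\bar M\big)$ and $W_\mu=\mathrm{diag}\big(\sum_{i\in\mathcal N_j}L_{d_i}I_{q_j};\ j=1,\dots,\bar M\big)$. For $x$ and positive semidefinite $W$, $\|x\|_W=\sqrt{x^TWx}$. *)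

(* Defs.v *)
From Stdlib Require Import Reals.
Open Scope R_scope.

(* Vectors of R^n are represented by functions nat -> R; only the
   coordinates k < n are meaningful. *)
Definition vec := nat -> R.

Fixpoint rsum (n : nat) (F : nat -> R) : R :=
  match n with
  | O => 0
  | S k => rsum k F + F k
  end.

Definition dot (n : nat) (x y : vec) : R := rsum n (fun k => x k * y k).
Definition nsq (n : nat) (x : vec) : R := dot n x x.
Definition vadd (x y : vec) : vec := fun k => x k + y k.
Definition vsub (x y : vec) : vec := fun k => x k - y k.
Definition vscal (a : R) (x : vec) : vec := fun k => a * x k.

(* f : vec -> R is a function of the first n coordinates only, i.e. a
   function on R^n *)
Definition respects (n : nat) (f : vec -> R) : Prop :=
  forall x y, (forall k, (k < n)%nat -> x k = y k) -> f x = f y.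

Definition strongly_convex (n : nat) (sigma : R) (f : vec -> R) : Prop :=
  0 < sigma /\
  forall x y t, 0 <= t <= 1 ->
    f (vadd (vscal t x) (vscal (1 - t) y))
    <= t * f x + (1 - t) * f y - sigma / 2 * t * (1 - t) * nsq n (vsub x y).

Definition has_gradient (n : nat) (f : vec -> R) (x g : vec) : Prop :=
  forall eps, 0 < eps -> exists delta, 0 < delta /\
    forall h, sqrt (nsq n h) < delta ->
      Rabs (f (vadd x h) - f x - dot n g h) <= eps * sqrt (nsq n h).

Definition lipschitz_gradient (n : nat) (L : R) (f : vec -> R) : Prop :=
  exists gf : vec -> vec,
    (forall x, has_gradient n f x (gf x)) /\
    (forall x y, sqrt (nsq n (vsub (gf x) (gf y))) <= L * sqrt (nsq n (vsub x y))).

(* primal variable z = (z_1,...,z_M): z i k = k-th coordinate of z_i *)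
Definition pvec := nat -> nat -> R.
(* block matrices: A j i r c = entry (r,c) of A_{ji} *)
Definition bmat := nat -> nat -> nat -> nat -> R.
(* block vectors indexed by row blocks: b j r = r-th coordinate of b_j *)
Definition bvec := nat -> nat -> R.

(* dual variable lambda = (nu, mu), nu j = nu_j in R^{p_j}, mu j = mu_j in R^{q_j} *)
Definition dvec : Type := (bvec * bvec)%type.

Definition bmatvec (M : nat) (n : nat -> nat) (A : bmat) (z : pvec) (j : nat) : vec :=
  fun r => rsum M (fun i => rsum (n i) (fun c => A j i r c * z i c)).

Definition ddot (Mb : nat) (p q : nat -> nat) (l l' : dvec) : R :=
  rsum Mb (fun j => dot (p j) (fst l j) (fst l' j) + dot (q j) (snd l j) (snd l' j)).
Definition dnsq Mb p q (l : dvec) : R := ddot Mb p q l l.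
Definition dadd (l l' : dvec) : dvec :=
  (fun j r => fst l j r + fst l' j r, fun j r => snd l j r + snd l' j r).
Definition dsub (l l' : dvec) : dvec :=
  (fun j r => fst l j r - fst l' j r, fun j r => snd l j r - snd l' j r).

Definition in_D (Mb : nat) (q : nat -> nat) (l : dvec) : Prop :=
  forall j k, (j < Mb)%nat -> (k < q j)%nat -> 0 <= snd l j k.

Definition lagrangian (M Mb : nat) (n p q : nat -> nat) (f : nat -> vec -> R)
  (A C : bmat) (b c : bvec) (z : pvec) (l : dvec) : R :=
  rsum M (fun i => f i (z i))
  + rsum Mb (fun j => dot (p j) (fst l j) (vsub (bmatvec M n A z j) (b j)))
  + rsum Mb (fun j => dot (q j) (snd l j) (vsub (bmatvec M n C z j) (c j))).

Definition is_min_value {X : Type} (S : X -> R) (v : R) : Prop :=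
  (exists x, S x = v) /\ (forall x, v <= S x).

Definition has_dgradient (Mb : nat) (p q : nat -> nat) (F : dvec -> R) (l g : dvec) : Prop :=
  forall eps, 0 < eps -> exists delta, 0 < delta /\
    forall h, sqrt (dnsq Mb p q h) < delta ->
      Rabs (F (dadd l h) - F l - ddot Mb p q g h) <= eps * sqrt (dnsq Mb p q h).

(* || [A_{ji}; C_{ji}]_{j in Nbar_i} x ||^2  for x in R^{n_i} *)
Definition stack_nsq (Mb : nat) (n p q : nat -> nat) (E : nat -> nat -> bool)
  (A C : bmat) (i : nat) (x : vec) : R :=
  rsum Mb (fun j => if E j i then
      nsq (p j) (fun r => rsum (n i) (fun c => A j i r c * x c))
    + nsq (q j) (fun r => rsum (n i) (fun c => C j i r c * x c))
    else 0).

Definition spec_norm_sq (Mb : nat) (n p q : nat -> nat) (E : nat -> nat -> bool)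
  (A C : bmat) (i : nat) (s : R) : Prop :=
  is_lub (fun v => exists x : vec, nsq (n i) x <= 1 /\ v = stack_nsq Mb n p q E A C i x) s.

(* ||lambda||_W^2 with W = diag(W_nu, W_mu), where the j-th diagonal block of
   both W_nu and W_mu is (sum_{i in N_j} L_{d_i}) I, and L_{d_i} = Ld i *)
Definition wnsq (M Mb : nat) (p q : nat -> nat) (E : nat -> nat -> bool)
  (Ld : nat -> R) (l : dvec) : R :=
  rsum Mb (fun j =>
    rsum M (fun i => if E j i then Ld i else 0)
    * (nsq (p j) (fst l j) + nsq (q j) (snd l j))).

(* Main.v *)
Require Import Defs.
From Stdlib Require Import Reals Lra Lia.
Open Scope R_scope.

Lemma rsum_ext n F G : (forall k, (k < n)%nat -> F k = G k) -> rsum n F = rsum n G.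
Proof. induction n; simpl; intros H; auto. rewrite IHn by (intros; apply H; lia). rewrite H by lia. auto. Qed.

Lemma rsum_lin n a b F G : rsum n (fun k => a * F k + b * G k) = a * rsum n F + b * rsum n G.
Proof. induction n; simpl; [ring|]. rewrite IHn. ring. Qed.

Lemma rsum_add n F G : rsum n (fun k => F k + G k) = rsum n F + rsum n G.
Proof. induction n; simpl; [ring|]. rewrite IHn. ring. Qed.

Lemma rsum_sub n F G : rsum n (fun k => F k - G k) = rsum n F - rsum n G.
Proof. induction n; simpl; [ring|]. rewrite IHn. ring. Qed.

Lemma rsum_scal n a F : rsum n (fun k => a * F k) = a * rsum n F.
Proof. induction n; simpl; [ring|]. rewrite IHn. ring. Qed.

Lemma rsum_scalr n a F : rsum n (fun k => F k * a) = rsum n F * a.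
Proof. induction n; simpl; [ring|]. rewrite IHn. ring. Qed.

Lemma rsum_zero n F : (forall k, (k < n)%nat -> F k = 0) -> rsum n F = 0.
Proof. intros H. rewrite (rsum_ext n F (fun _ => 0)) by auto. clear H. induction n; simpl; auto; rewrite IHn; ring. Qed.

Lemma rsum_le n F G : (forall k, (k < n)%nat -> F k <= G k) -> rsum n F <= rsum n G.
Proof. induction n; simpl; intros H; [lra|]. assert (H1 := H n (Nat.lt_succ_diag_r n)).
 assert (rsum n F <= rsum n G) by (apply IHn; intros; apply H; lia). lra. Qed.

Lemma rsum_nonneg n F : (forall k, (k < n)%nat -> 0 <= F k) -> 0 <= rsum n F.
Proof. intros H. replace 0 with (rsum n (fun _ => 0)). apply rsum_le; auto. apply rsum_zero; auto. Qed.

Lemma rsum_term n F k : (forall k, (k < n)%nat -> 0 <= F k) -> (k < n)%nat -> F k <= rsum n F.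
Proof. induction n; simpl; intros H Hk; [lia|].
 assert (0 <= rsum n F) by (apply rsum_nonneg; intros; apply H; lia).
 destruct (Nat.eq_dec k n). subst. lra.
 assert (F k <= rsum n F) by (apply IHn; [intros; apply H|]; lia).
 assert (0 <= F n) by (apply H; lia). lra. Qed.

Lemma rsum_swap m n (F : nat -> nat -> R) :
  rsum m (fun j => rsum n (fun i => F j i)) = rsum n (fun i => rsum m (fun j => F j i)).
Proof. induction m; simpl. symmetry; apply rsum_zero; auto.
 rewrite IHm. rewrite <- rsum_add. auto. Qed.

Lemma nsq_nonneg n x : 0 <= nsq n x.
Proof. unfold nsq, dot. apply rsum_nonneg. intros. nra. Qed.

Lemma nsq_ext n x y : (forall k, (k < n)%nat -> x k = y k) -> nsq n x = nsq n y.
Proof. intros H; unfold nsq, dot; apply rsum_ext; intros; rewrite H; auto. Qed.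

Lemma nsq_scal n t x : nsq n (fun k => t * x k) = t * t * nsq n x.
Proof. unfold nsq, dot. rewrite <- rsum_scal. apply rsum_ext; intros; ring. Qed.

Lemma nsq_zero n a : nsq n a = 0 -> forall r, (r < n)%nat -> a r = 0.
Proof. intros H r Hr. assert (a r * a r <= nsq n a).
 { unfold nsq, dot. apply (rsum_term n (fun k => a k * a k)); auto. intros; nra. } nra. Qed.

Lemma dot_zero n a h : (forall r, (r < n)%nat -> a r = 0) -> dot n a h = 0.
Proof. intros H; unfold dot; apply rsum_zero; intros; rewrite H; auto; ring. Qed.

Lemma dot_sum m M (F : nat -> vec) h :
  dot m (fun r => rsum M (fun i => F i r)) h = rsum M (fun i => dot m (F i) h).
Proof. unfold dot. rewrite (rsum_ext m _ (fun r => rsum M (fun i => F i r * h r))).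
 apply rsum_swap. intros; symmetry; apply rsum_scalr. Qed.

Lemma young n a h al : 0 < al -> dot n a h >= - (al * nsq n h + / al * nsq n a) / 2.
Proof. intros Hal.
 assert (H0 : 0 <= al*al * nsq n h + 2 * al * dot n a h + nsq n a).
 { replace (al*al * nsq n h + 2 * al * dot n a h + nsq n a) with (nsq n (fun k => al * h k + a k)).
   apply nsq_nonneg. unfold nsq, dot. rewrite <- !rsum_scal, <- !rsum_add. apply rsum_ext; intros; ring. }
 apply Rle_ge. apply (Rmult_le_reg_l al); auto.
 replace (al * (- (al * nsq n h + / al * nsq n a) / 2)) with (- (al*al*nsq n h + nsq n a)/2) by (field; lra).
 lra. Qed.

Definition res (M : nat) (n : nat -> nat) (A C : bmat) (b c : bvec) (z : pvec) : dvec :=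
  (fun j r => bmatvec M n A z j r - b j r, fun j r => bmatvec M n C z j r - c j r).

Lemma dot_id n m l v : dot n m v = dot n l v + dot n v (fun k => m k - l k).
Proof. unfold dot. rewrite <- rsum_add. apply rsum_ext; intros; ring. Qed.

Lemma lag_shift M Mb n p q f A C b c z mu la :
  lagrangian M Mb n p q f A C b c z mu =
  lagrangian M Mb n p q f A C b c z la + ddot Mb p q (res M n A C b c z) (dsub mu la).
Proof. unfold lagrangian, ddot, res, dsub; simpl.
 assert (E1 : rsum Mb (fun j => dot (p j) (fst mu j) (vsub (bmatvec M n A z j) (b j)))
   + rsum Mb (fun j => dot (q j) (snd mu j) (vsub (bmatvec M n C z j) (c j)))
   = rsum Mb (fun j => dot (p j) (fst la j) (vsub (bmatvec M n A z j) (b j)))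
   + rsum Mb (fun j => dot (q j) (snd la j) (vsub (bmatvec M n C z j) (c j)))
   + rsum Mb (fun j => dot (p j) (fun r => bmatvec M n A z j r - b j r) (fun r => fst mu j r - fst la j r) +
        dot (q j) (fun r => bmatvec M n C z j r - c j r) (fun r => snd mu j r - snd la j r))).
 { rewrite <- !rsum_add. apply rsum_ext; intros j Hj.
   rewrite (dot_id (p j) (fst mu j) (fst la j)), (dot_id (q j) (snd mu j) (snd la j)).
   unfold vsub. ring. }
 lra. Qed.

Lemma ddot_ext Mb p q x h1 h2 :
  (forall j r, fst h1 j r = fst h2 j r) -> (forall j r, snd h1 j r = snd h2 j r) ->
  ddot Mb p q x h1 = ddot Mb p q x h2.
Proof. intros H1 H2. unfold ddot, dot. apply rsum_ext; intros.
 f_equal; apply rsum_ext; intros; rewrite ?H1, ?H2; auto. Qed.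

Definition sc (t : R) (h : dvec) : dvec := (fun j r => t * fst h j r, fun j r => t * snd h j r).

Lemma ddot_sc Mb p q x t h : ddot Mb p q x (sc t h) = t * ddot Mb p q x h.
Proof. unfold ddot, dot, sc; simpl. rewrite <- rsum_scal. apply rsum_ext; intros.
 rewrite Rmult_plus_distr_l, <- !rsum_scal. f_equal; apply rsum_ext; intros; ring. Qed.

Lemma dnsq_sc Mb p q t h : dnsq Mb p q (sc t h) = t * t * dnsq Mb p q h.
Proof. unfold dnsq, ddot, dot, sc; simpl. rewrite <- rsum_scal. apply rsum_ext; intros.
 rewrite Rmult_plus_distr_l, <- !rsum_scal. f_equal; apply rsum_ext; intros; ring. Qed.

Lemma dnsq_nonneg Mb p q h : 0 <= dnsq Mb p q h.
Proof. unfold dnsq, ddot. apply rsum_nonneg; intros. pose proof (nsq_nonneg (p k) (fst h k)).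
 pose proof (nsq_nonneg (q k) (snd h k)). unfold nsq in *. lra. Qed.

Lemma bm_diff M n (A : bmat) z1 z2 j r :
  bmatvec M n A z1 j r - bmatvec M n A z2 j r =
  rsum M (fun i => rsum (n i) (fun c => A j i r c * vsub (z1 i) (z2 i) c)).
Proof. unfold bmatvec. rewrite <- rsum_sub. apply rsum_ext; intros.
 rewrite <- rsum_sub. apply rsum_ext; intros. unfold vsub; ring. Qed.

Definition Tji (n p q : nat -> nat) (A C : bmat) j i (x : vec) (h : dvec) : R :=
  dot (p j) (fun r => rsum (n i) (fun c => A j i r c * x c)) (fst h j)
  + dot (q j) (fun r => rsum (n i) (fun c => C j i r c * x c)) (snd h j).

Lemma dot_subl n X Y h : dot n X h - dot n Y h = dot n (fun r => X r - Y r) h.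
Proof. unfold dot. rewrite <- rsum_sub. apply rsum_ext; intros; ring. Qed.

Lemma dot_extl n X Y h : (forall r, (r < n)%nat -> X r = Y r) -> dot n X h = dot n Y h.
Proof. intros H; unfold dot; apply rsum_ext; intros; rewrite H; auto. Qed.

Lemma res_diff M Mb n p q A C b c z1 z2 h :
  ddot Mb p q (res M n A C b c z1) h - ddot Mb p q (res M n A C b c z2) h =
  rsum Mb (fun j => rsum M (fun i => Tji n p q A C j i (vsub (z1 i) (z2 i)) h)).
Proof. unfold ddot, res; simpl. rewrite <- rsum_sub. apply rsum_ext; intros j Hj.
 unfold Tji. rewrite rsum_add.
 rewrite <- (dot_sum (p j) M (fun i r => rsum (n i) (fun c0 => A j i r c0 * vsub (z1 i) (z2 i) c0))).
 rewrite <- (dot_sum (q j) M (fun i r => rsum (n i) (fun c0 => C j i r c0 * vsub (z1 i) (z2 i) c0))).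
 rewrite (dot_extl (p j) (fun r => rsum M (fun i => rsum (n i) (fun c0 => A j i r c0 * vsub (z1 i) (z2 i) c0)))
    (fun r => (bmatvec M n A z1 j r - b j r) - (bmatvec M n A z2 j r - b j r)))
   by (intros r _; pose proof (bm_diff M n A z1 z2 j r); cbv beta in *; lra).
 rewrite (dot_extl (q j) (fun r => rsum M (fun i => rsum (n i) (fun c0 => C j i r c0 * vsub (z1 i) (z2 i) c0)))
    (fun r => (bmatvec M n C z1 j r - c j r) - (bmatvec M n C z2 j r - c j r)))
   by (intros r _; pose proof (bm_diff M n C z1 z2 j r); cbv beta in *; lra).
 rewrite <- !dot_subl. ring. Qed.

Lemma bmatvec_lin M n (A : bmat) z1 z2 t s j r :
  bmatvec M n A (fun i => vadd (vscal t (z1 i)) (vscal s (z2 i))) j r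
  = t * bmatvec M n A z1 j r + s * bmatvec M n A z2 j r.
Proof. unfold bmatvec. rewrite <- rsum_lin. apply rsum_ext; intros.
 rewrite <- rsum_lin. apply rsum_ext; intros. unfold vadd, vscal; ring. Qed.

Lemma dot_affine n l X X1 X2 (bb : vec) t :
  (forall r, (r < n)%nat -> X r = t * X1 r + (1 - t) * X2 r) ->
  dot n l (vsub X bb) = t * dot n l (vsub X1 bb) + (1 - t) * dot n l (vsub X2 bb).
Proof. intros H. unfold dot. rewrite <- rsum_lin. apply rsum_ext; intros.
 unfold vsub; rewrite H by auto; ring. Qed.

Lemma rsum_lin3 n a b e F G H :
  rsum n (fun k => a * F k + b * G k + e * H k) = a * rsum n F + b * rsum n G + e * rsum n H.
Proof. induction n; simpl; [ring|]. rewrite IHn. ring. Qed.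

Lemma lag_comb M Mb n p q f A C b c sigma z1 z2 la t :
  (forall i, (i < M)%nat -> strongly_convex (n i) (sigma i) (f i)) -> 0 <= t <= 1 ->
  lagrangian M Mb n p q f A C b c (fun i => vadd (vscal t (z1 i)) (vscal (1 - t) (z2 i))) la
  <= t * lagrangian M Mb n p q f A C b c z1 la + (1 - t) * lagrangian M Mb n p q f A C b c z2 la
     - t * (1 - t) / 2 * rsum M (fun i => sigma i * nsq (n i) (vsub (z1 i) (z2 i))).
Proof. intros Hsc Ht. unfold lagrangian.
 assert (HF : rsum M (fun i => f i (vadd (vscal t (z1 i)) (vscal (1 - t) (z2 i))))
   <= t * rsum M (fun i => f i (z1 i)) + (1 - t) * rsum M (fun i => f i (z2 i))
      + (- (t * (1 - t) / 2)) * rsum M (fun i => sigma i * nsq (n i) (vsub (z1 i) (z2 i)))).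
 { rewrite <- rsum_lin3. apply rsum_le; intros i Hi. destruct (Hsc i Hi) as [_ H].
   specialize (H (z1 i) (z2 i) t Ht). lra. }
 assert (HP : rsum Mb (fun j => dot (p j) (fst la j)
    (vsub (bmatvec M n A (fun i => vadd (vscal t (z1 i)) (vscal (1 - t) (z2 i))) j) (b j)))
   = t * rsum Mb (fun j => dot (p j) (fst la j) (vsub (bmatvec M n A z1 j) (b j)))
     + (1 - t) * rsum Mb (fun j => dot (p j) (fst la j) (vsub (bmatvec M n A z2 j) (b j)))).
 { rewrite <- rsum_lin. apply rsum_ext; intros. apply dot_affine. intros; apply bmatvec_lin. }
 assert (HQ : rsum Mb (fun j => dot (q j) (snd la j)
    (vsub (bmatvec M n C (fun i => vadd (vscal t (z1 i)) (vscal (1 - t) (z2 i))) j) (c j)))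
   = t * rsum Mb (fun j => dot (q j) (snd la j) (vsub (bmatvec M n C z1 j) (c j)))
     + (1 - t) * rsum Mb (fun j => dot (q j) (snd la j) (vsub (bmatvec M n C z2 j) (c j)))).
 { rewrite <- rsum_lin. apply rsum_ext; intros. apply dot_affine. intros; apply bmatvec_lin. }
 rewrite HP, HQ. lra. Qed.

Lemma sc_gap M Mb n p q f A C b c sigma z1 z2 la :
  (forall i, (i < M)%nat -> strongly_convex (n i) (sigma i) (f i)) ->
  (forall z, lagrangian M Mb n p q f A C b c z2 la <= lagrangian M Mb n p q f A C b c z la) ->
  lagrangian M Mb n p q f A C b c z1 la - lagrangian M Mb n p q f A C b c z2 la >=
  1 / 2 * rsum M (fun i => sigma i * nsq (n i) (vsub (z1 i) (z2 i))).
Proof. intros Hsc Hmin.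
 set (S := rsum M (fun i => sigma i * nsq (n i) (vsub (z1 i) (z2 i)))).
 set (X := lagrangian M Mb n p q f A C b c z1 la - lagrangian M Mb n p q f A C b c z2 la).
 assert (HS : 0 <= S). { apply rsum_nonneg; intros. destruct (Hsc k H). pose proof (nsq_nonneg (n k) (vsub (z1 k) (z2 k))). nra. }
 assert (HX : 0 <= X) by (unfold X; pose proof (Hmin z1); lra).
 assert (Ht : forall t, 0 < t <= 1 -> X >= (1 - t) / 2 * S).
 { intros t Ht. pose proof (lag_comb M Mb n p q f A C b c sigma z1 z2 la t Hsc ltac:(lra)).
   pose proof (Hmin (fun i => vadd (vscal t (z1 i)) (vscal (1 - t) (z2 i)))).
   fold S in H. assert (t * X >= t * ((1 - t) / 2 * S)) by (unfold X; nra).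
   apply Rle_ge; apply (Rmult_le_reg_l t); lra. }
 destruct (Rlt_or_le X (S/2)) as [Hlt|]; [|lra].
 set (t := (S/2 - X)/(S+1)).
 assert (Ht1 : t * (S + 1) = S/2 - X) by (unfold t; field; lra).
 assert (0 < t) by (unfold t; apply Rdiv_lt_0_compat; lra).
 assert (t <= 1) by nra.
 specialize (Ht t ltac:(lra)). nra. Qed.

Lemma stack_scal Mb n p q E A C i t x :
  stack_nsq Mb n p q E A C i (fun k => t * x k) = t * t * stack_nsq Mb n p q E A C i x.
Proof. unfold stack_nsq. rewrite <- rsum_scal. apply rsum_ext; intros j _.
 destruct (E j i); [|ring].
 rewrite (nsq_ext (p j) _ (fun r => t * rsum (n i) (fun c => A j i r c * x c))).
 rewrite (nsq_ext (q j) _ (fun r => t * rsum (n i) (fun c => C j i r c * x c))).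
 rewrite !nsq_scal. ring.
 all: intros; rewrite <- rsum_scal; apply rsum_ext; intros; ring. Qed.

Lemma stack_nonneg Mb n p q E A C i x : 0 <= stack_nsq Mb n p q E A C i x.
Proof. unfold stack_nsq. apply rsum_nonneg; intros. destruct (E k i); [|lra].
 pose proof (nsq_nonneg (p k) (fun r => rsum (n i) (fun c => A k i r c * x c))).
 pose proof (nsq_nonneg (q k) (fun r => rsum (n i) (fun c => C k i r c * x c))). lra. Qed.

Lemma sn_nonneg Mb n p q E A C i s : spec_norm_sq Mb n p q E A C i s -> 0 <= s.
Proof. intros [Hub _]. eapply Rle_trans; [|apply (Hub (stack_nsq Mb n p q E A C i (fun _ => 0)))].
 apply stack_nonneg. exists (fun _ => 0). split; auto.
 unfold nsq, dot. rewrite rsum_zero; [lra|]. intros; ring. Qed.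

Lemma stack_bound Mb n p q E A C i s u :
  spec_norm_sq Mb n p q E A C i s -> stack_nsq Mb n p q E A C i u <= s * nsq (n i) u.
Proof. intros Hs. pose proof Hs as [Hub _]. pose proof (nsq_nonneg (n i) u) as HN.
 pose proof (stack_nonneg Mb n p q E A C i u) as HK.
 pose proof (sn_nonneg _ _ _ _ _ _ _ _ _ Hs) as Hs0.
 destruct HN as [HN|HN].
 - set (a := / sqrt (nsq (n i) u)).
   assert (Hsq := sqrt_lt_R0 _ HN). assert (Hss := sqrt_sqrt (nsq (n i) u) ltac:(lra)).
   assert (Ha : a * a * nsq (n i) u = 1) by (unfold a; rewrite <- Hss at 3; field; lra).
   assert (H := Hub (stack_nsq Mb n p q E A C i (fun k => a * u k))).
   rewrite stack_scal in H.
   assert (H1 : a * a * stack_nsq Mb n p q E A C i u <= s).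
   { apply H. exists (fun k => a * u k). rewrite nsq_scal. split; [lra | rewrite stack_scal; auto]. }
   assert (0 < a) by (unfold a; apply Rinv_0_lt_compat; lra).
   assert (H2 : stack_nsq Mb n p q E A C i u = (a * a * stack_nsq Mb n p q E A C i u) * nsq (n i) u)
     by (replace (a * a * stack_nsq Mb n p q E A C i u * nsq (n i) u) with (stack_nsq Mb n p q E A C i u * (a * a * nsq (n i) u)) by ring; rewrite Ha; ring).
   rewrite H2. apply Rmult_le_compat_r; lra.
 - rewrite <- HN. destruct HK as [HK|HK]; [|lra]. exfalso.
   set (a := sqrt ((s + 1) / stack_nsq Mb n p q E A C i u)).
   assert (Ha : a * a = (s + 1) / stack_nsq Mb n p q E A C i u).
   { unfold a; apply sqrt_sqrt. apply Rlt_le, Rdiv_lt_0_compat; lra. }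
   assert (H := Hub (stack_nsq Mb n p q E A C i (fun k => a * u k))).
   rewrite stack_scal, Ha in H.
   assert (H1 : (s + 1) / stack_nsq Mb n p q E A C i u * stack_nsq Mb n p q E A C i u <= s).
   { apply H. exists (fun k => a * u k). rewrite nsq_scal, <- HN. split; [lra | rewrite stack_scal, Ha; auto]. }
   field_simplify in H1; lra. Qed.

Definition cc (s sg : R) : R := if Rlt_dec 0 s then sg / s else 0.

Lemma Tji_bound M Mb n p q (A C : bmat) E sn sigma j i x h :
  (forall j i, (j < Mb)%nat -> (i < M)%nat -> E j i = false ->
          (forall r k, (r < p j)%nat -> (k < n i)%nat -> A j i r k = 0) /\
          (forall r k, (r < q j)%nat -> (k < n i)%nat -> C j i r k = 0)) ->
  spec_norm_sq Mb n p q E A C i (sn i) -> 0 < sigma i -> (j < Mb)%nat -> (i < M)%nat ->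
  Tji n p q A C j i x h >=
  - 1 / 2 * ((if E j i then sn i / sigma i else 0) * (nsq (p j) (fst h j) + nsq (q j) (snd h j)))
  - 1 / 2 * (cc (sn i) (sigma i) * (if E j i then
      nsq (p j) (fun r => rsum (n i) (fun c => A j i r c * x c))
    + nsq (q j) (fun r => rsum (n i) (fun c => C j i r c * x c)) else 0)).
Proof. intros HE Hs Hsg Hj Hi. unfold Tji, cc.
 destruct (E j i) eqn:Eji.
 - destruct (Rlt_dec 0 (sn i)) as [Hpos|Hnpos].
   + set (al := sn i / sigma i). assert (0 < al) by (unfold al; apply Rdiv_lt_0_compat; lra).
     assert (Hinv : / al = sigma i / sn i) by (unfold al; field; lra).
     pose proof (young (p j) (fun r => rsum (n i) (fun c => A j i r c * x c)) (fst h j) al H).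
     pose proof (young (q j) (fun r => rsum (n i) (fun c => C j i r c * x c)) (snd h j) al H).
     rewrite Hinv in *. lra.
   + pose proof (sn_nonneg _ _ _ _ _ _ _ _ _ Hs). assert (sn i = 0) by lra.
     pose proof (stack_bound _ _ _ _ _ _ _ _ _ x Hs) as Hb.
     rewrite H0, Rmult_0_l in Hb.
     assert (Hterm := rsum_term Mb (fun j => if E j i then
      nsq (p j) (fun r => rsum (n i) (fun c => A j i r c * x c))
    + nsq (q j) (fun r => rsum (n i) (fun c => C j i r c * x c)) else 0) j).
     cbv beta in Hterm. rewrite Eji in Hterm. unfold stack_nsq in Hb.
     assert (Hle := Hterm ltac:(intros k _; destruct (E k i);
        [pose proof (nsq_nonneg (p k) (fun r => rsum (n i) (fun c => A k i r c * x c)));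
         pose proof (nsq_nonneg (q k) (fun r => rsum (n i) (fun c => C k i r c * x c))); lra | lra]) Hj).
     pose proof (nsq_nonneg (p j) (fun r => rsum (n i) (fun c => A j i r c * x c))).
     pose proof (nsq_nonneg (q j) (fun r => rsum (n i) (fun c => C j i r c * x c))).
     rewrite dot_zero, (dot_zero (q j)).
     * rewrite H0. unfold Rdiv. rewrite Rmult_0_l. lra.
     * apply nsq_zero. lra.
     * apply nsq_zero. lra.
 - destruct (HE j i Hj Hi Eji) as [HA HC].
   rewrite dot_zero, (dot_zero (q j)).
   + destruct (Rlt_dec 0 (sn i)); lra.
   + intros r Hr. apply rsum_zero; intros; rewrite HC by auto; ring.
   + intros r Hr. apply rsum_zero; intros; rewrite HA by auto; ring. Qed.

Theorem lemma1
  (M Mb : nat) (n p q : nat -> nat)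
  (A C : bmat) (b c : bvec) (E : nat -> nat -> bool)
  (f : nat -> vec -> R) (sigma Lf : nat -> R)
  (HE : forall j i, (j < Mb)%nat -> (i < M)%nat -> E j i = false ->
          (forall r k, (r < p j)%nat -> (k < n i)%nat -> A j i r k = 0) /\
          (forall r k, (r < q j)%nat -> (k < n i)%nat -> C j i r k = 0))
  (Hresp : forall i, (i < M)%nat -> respects (n i) (f i))
  (Hsc : forall i, (i < M)%nat -> strongly_convex (n i) (sigma i) (f i))
  (Hlip : forall i, (i < M)%nat -> lipschitz_gradient (n i) (Lf i) (f i))
  (sn : nat -> R)
  (Hsn : forall i, (i < M)%nat -> spec_norm_sq Mb n p q E A C i (sn i))
  (d : dvec -> R)
  (Hd : forall l : dvec, is_min_value (fun z : pvec => lagrangian M Mb n p q f A C b c z l) (d l))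
  (l lb gd : dvec)
  (Hl : in_D Mb q l) (Hlb : in_D Mb q lb)
  (Hgd : has_dgradient Mb p q d lb gd) :
  d l >= d lb + ddot Mb p q gd (dsub l lb)
         - 1 / 2 * wnsq M Mb p q E (fun i => sn i / sigma i) (dsub l lb).
Proof.
 destruct (Hd lb) as [[zb Hzb] Hminb]. destruct (Hd l) as [[zs Hzs] _].
 cbv beta in Hzb, Hzs, Hminb.
 set (D := dsub l lb).
 set (S := rsum M (fun i => sigma i * nsq (n i) (vsub (zs i) (zb i)))).
 assert (H1 : lagrangian M Mb n p q f A C b c zs lb - lagrangian M Mb n p q f A C b c zb lb >= 1/2 * S).
 { apply sc_gap; auto. intros z; rewrite Hzb; apply Hminb. }
 pose proof (lag_shift M Mb n p q f A C b c zs l lb) as H2. fold D in H2.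
 pose proof (res_diff M Mb n p q A C b c zs zb D) as H3.
 set (W := wnsq M Mb p q E (fun i => sn i / sigma i) D).
 assert (H4 : rsum Mb (fun j => rsum M (fun i => Tji n p q A C j i (vsub (zs i) (zb i)) D))
              >= - 1/2 * W - 1/2 * S).
 { set (u := fun i => vsub (zs i) (zb i)).
   set (K := fun j i => if E j i then
      nsq (p j) (fun r => rsum (n i) (fun c => A j i r c * u i c))
    + nsq (q j) (fun r => rsum (n i) (fun c => C j i r c * u i c)) else 0).
   set (Nj := fun j => nsq (p j) (fst D j) + nsq (q j) (snd D j)).
   assert (Ha : rsum Mb (fun j => rsum M (fun i => Tji n p q A C j i (u i) D)) >=
     rsum Mb (fun j => rsum M (fun i => (-1/2 * Nj j) * (if E j i then sn i / sigma i else 0)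
        + (-1/2) * (cc (sn i) (sigma i) * K j i)))).
   { apply Rle_ge, rsum_le; intros j Hj. apply rsum_le; intros i Hi.
     pose proof (Tji_bound M Mb n p q A C E sn sigma j i (u i) D HE (Hsn i Hi) ltac:(destruct (Hsc i Hi); auto) Hj Hi).
     unfold K, Nj. lra. }
   assert (Hb : rsum Mb (fun j => rsum M (fun i => (-1/2 * Nj j) * (if E j i then sn i / sigma i else 0)
        + (-1/2) * (cc (sn i) (sigma i) * K j i)))
      = -1/2 * W + -1/2 * rsum M (fun i => rsum Mb (fun j => cc (sn i) (sigma i) * K j i))).
   { rewrite (rsum_swap M Mb (fun i j => cc (sn i) (sigma i) * K j i)). unfold W, wnsq. rewrite <- rsum_lin. apply rsum_ext; intros j _.
     rewrite rsum_lin. unfold Nj. fold D. ring. }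
   assert (Hc : rsum M (fun i => rsum Mb (fun j => cc (sn i) (sigma i) * K j i)) <= S).
   { apply rsum_le; intros i Hi. rewrite rsum_scal.
     assert (Hst : rsum Mb (fun j => K j i) = stack_nsq Mb n p q E A C i (u i)) by reflexivity.
     rewrite Hst. pose proof (stack_bound _ _ _ _ _ _ _ _ _ (u i) (Hsn i Hi)).
     pose proof (stack_nonneg Mb n p q E A C i (u i)).
     pose proof (nsq_nonneg (n i) (u i)). destruct (Hsc i Hi) as [Hsg _].
     unfold cc. destruct (Rlt_dec 0 (sn i)).
     - apply Rle_trans with (sigma i / sn i * (sn i * nsq (n i) (u i))).
       apply Rmult_le_compat_l; auto. apply Rlt_le, Rdiv_lt_0_compat; lra.
       right; unfold u; field; lra.
     - unfold u in *. nra. }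
   unfold u in Ha; cbv beta in Ha; lra. }
 assert (H5 : ddot Mb p q gd D <= ddot Mb p q (res M n A C b c zb) D).
 { set (G := ddot Mb p q gd D). set (R0 := ddot Mb p q (res M n A C b c zb) D).
   set (N := sqrt (dnsq Mb p q D)). assert (HN : 0 <= N) by apply sqrt_pos.
   assert (Heps : forall eps, 0 < eps -> G <= R0 + eps * N).
   { intros eps Heps. destruct (Hgd eps Heps) as [delta [Hdel Hh]].
     set (t := delta / (2 * (N + 1))).
     assert (Ht : 0 < t) by (unfold t; apply Rdiv_lt_0_compat; lra).
     assert (HtN : t * N < delta).
     { unfold t. apply Rmult_lt_reg_r with (2 * (N + 1)); [lra|].
       replace (delta / (2 * (N + 1)) * N * (2 * (N + 1))) with (delta * N) by (field; lra). nra. }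
     assert (Hsq : sqrt (dnsq Mb p q (sc t D)) = t * N).
     { rewrite dnsq_sc, sqrt_mult, sqrt_square; auto; try lra. apply Rmult_le_pos; lra.
       apply dnsq_nonneg. }
     specialize (Hh (sc t D)). rewrite Hsq in Hh. specialize (Hh HtN).
     rewrite ddot_sc in Hh. fold G in Hh.
     assert (Hup : d (dadd lb (sc t D)) <= d lb + t * R0).
     { rewrite <- Hzb. eapply Rle_trans. apply (proj2 (Hd (dadd lb (sc t D))) zb). cbv beta.
       rewrite (lag_shift M Mb n p q f A C b c zb (dadd lb (sc t D)) lb).
       rewrite (ddot_ext Mb p q _ _ (sc t D)). rewrite ddot_sc. fold R0. lra.
       all: intros; simpl; ring. }
     assert (Habs : d (dadd lb (sc t D)) - d lb - t * G >= - (eps * (t * N))).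
     { revert Hh. unfold Rabs. destruct Rcase_abs; lra. }
     apply (Rmult_le_reg_l t); [lra|]. nra. }
   destruct (Rle_or_lt G R0) as [|Hlt]; auto. exfalso.
   specialize (Heps ((G - R0) / (2 * (N + 1))) ltac:(apply Rdiv_lt_0_compat; lra)).
   assert ((G - R0) / (2 * (N + 1)) * N < G - R0).
   { apply Rmult_lt_reg_r with (2 * (N + 1)); [lra|].
     replace ((G - R0) / (2 * (N + 1)) * N * (2 * (N + 1))) with ((G - R0) * N) by (field; lra). nra. }
   lra. }
 rewrite <- Hzs, <- Hzb. fold W. lra.
Qed.
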